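(* Let $K\ge2$. The capacity region of the $K$-receiver combination network with nested messages $M_{\overline{K}}$ (required by receivers $[1:K-1]$) and $M_{[1:K]}$ (required by all receivers) is the set of rate pairs $(R_{\overline{K}},R_{[1:K]})$ with $R_{[1:K]}\le C_{\mathsf{W}_K^{\mathsf{P}}}$ and $R_{[1:K]}+R_{\overline{K}}\le C_{\mathsf{W}_j^{\mathsf{P}}}$ for all $j\in[1:K-1]$.
   Context: The $K$-receiver combination network with capacities $C_S\ge0$, $S\in\mathsf{P}$ ($\mathsf{P}$ = nonempty subsets of $[1:K]$): deterministic broadcast channel with input $X=(V_S:S\in\mathsf{P})$, $|\mathcal{V}_S|=2^{C_S}$, and outputs $Y_i=(V_S:S\in\mathsf{W}_i^{\mathsf{P}})$ where $\mathsf{W}_i^{\mathsf{P}}=\{T\in\mathsf{P}:i\in T\}$. Messages independent, each required by the indicated receivers; achievability and capacity region as usual. $C_{\mathsf{W}}=\sum_{S\in\mathsf{W}}C_S$; $\overline{K}$ denotes $[1:K]\setminus\{K\}$. *)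

(* Defs.v *)
From Stdlib Require Import Reals.
From mathcomp Require Import all_boot.

Set Implicit Arguments.
Unset Strict Implicit.
Unset Printing Implicit Defensive.

Local Open Scope R_scope.

(* Receivers are 'I_K (receiver k of the paper, k in [1:K], is the ordinal
   with value k-1).  Links are indexed by subsets S of 'I_K; the link
   V_S has alphabet of size a S = 2^{C_S} (for S nonempty).  The empty set
   is not a link of the network: we give it a trivial (size 1) alphabet
   so that it carries nothing. *)

Definition link_size (K : nat) (a : {set 'I_K} -> nat) (S : {set 'I_K}) : nat :=
  if S == set0 then 1%nat else a S.

Definition cap (K : nat) (a : {set 'I_K} -> nat) (S : {set 'I_K}) : R :=
  ln (INR (a S)) / ln 2.

Definition capW (K : nat) (a : {set 'I_K} -> nat) (i : 'I_K) : R :=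
  \big[Rplus/0]_(T : {set 'I_K} | (T != set0) && (i \in T)) cap a T.

Definition chan_block (K : nat) (a : {set 'I_K} -> nat) (n : nat) : Type :=
  forall S : {set 'I_K}, 'I_n -> 'I_(link_size a S).

(* A decoding map at receiver i is a function of X^n that only depends on
   Y_i^n = (V_S^n : S in W_i^P). *)
Definition observes (K : nat) (a : {set 'I_K} -> nat) (n : nat) (i : 'I_K)
  (T : Type) (d : chan_block a n -> T) : Prop :=
  forall x y : chan_block a n,
    (forall (S : {set 'I_K}) (t : 'I_n), i \in S -> x S t = y S t) -> d x = d y.

Definition Rceil (x : R) : Z := (- Int_part (- x))%Z.

Definition msg_size (n : nat) (r : R) : nat :=
  Z.to_nat (Rceil (Rpower 2 (INR n * r))).

Definition is_last (K : nat) (i : 'I_K) : bool := (val i == K.-1)%nat.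

(* Number of message pairs (w1, w2) in error for code (enc, d1, d2):
   w1 is message M_{Kbar} (required by receivers 1..K-1),
   w2 is message M_{[1:K]} (required by all receivers). *)
Definition n_errors (K : nat) (a : {set 'I_K} -> nat) (n m1 m2 : nat)
  (enc : 'I_m1 -> 'I_m2 -> chan_block a n)
  (d1 : 'I_K -> chan_block a n -> 'I_m1)
  (d2 : 'I_K -> chan_block a n -> 'I_m2) : nat :=
  #|[set w : 'I_m1 * 'I_m2 |
      [exists i : 'I_K,
         ((~~ is_last i) && (d1 i (enc w.1 w.2) != w.1))
         || (d2 i (enc w.1 w.2) != w.2)]]|.

Definition err_prob (K : nat) (a : {set 'I_K} -> nat) (n m1 m2 : nat)
  (enc : 'I_m1 -> 'I_m2 -> chan_block a n)
  (d1 : 'I_K -> chan_block a n -> 'I_m1)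
  (d2 : 'I_K -> chan_block a n -> 'I_m2) : R :=
  INR (n_errors enc d1 d2) / INR (m1 * m2).

(* (R1, R2) = (R_{Kbar}, R_{[1:K]}) is achievable: there is a sequence of
   (2^{nR1}, 2^{nR2}, n) codes whose error probability tends to 0. *)
Definition achievable (K : nat) (a : {set 'I_K} -> nat) (R1 R2 : R) : Prop :=
  0 <= R1 /\ 0 <= R2 /\
  forall eps : R, 0 < eps ->
  exists N : nat, forall n : nat, (N <= n)%nat ->
  exists (enc : 'I_(msg_size n R1) -> 'I_(msg_size n R2) -> chan_block a n)
         (d1 : 'I_K -> chan_block a n -> 'I_(msg_size n R1))
         (d2 : 'I_K -> chan_block a n -> 'I_(msg_size n R2)),
    (forall i, observes i (d1 i)) /\ (forall i, observes i (d2 i)) /\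
    err_prob enc d1 d2 <= eps.

Definition in_capacity_region (K : nat) (a : {set 'I_K} -> nat) (R1 R2 : R) : Prop :=
  forall delta : R, 0 < delta ->
  exists r1 r2 : R, achievable a r1 r2 /\ Rabs (r1 - R1) < delta /\ Rabs (r2 - R2) < delta.

(* Main.v *)
Require Import Defs.
From HB Require Import structures.
From Stdlib Require Import Reals Lra Classical ZArith.
From mathcomp Require Import all_boot.
Set Implicit Arguments. Unset Strict Implicit. Unset Printing Implicit Defensive.

Lemma card_coll1 (U : finType) (u v : U) : u != v ->
  #|[set g : {ffun U -> bool} | g u == g v]| * 2 = 2 ^ #|U|.
Proof.
move=> nuv.
pose flip (g : {ffun U -> bool}) := [ffun x => if x == v then ~~ g x else g x].
have flipK : involutive flip.
  by move=> g; apply/ffunP=> x; rewrite !ffunE; case: (x == v) => //=; rewrite negbK.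
set A := [set g | _].
have hC : flip @: A = ~: A.
  apply/setP=> g; rewrite in_setC.
  apply/imsetP/idP.
    case=> h; rewrite inE => /eqP Hh ->.
    by rewrite inE !ffunE eqxx (negbTE nuv) Hh; case: (h v).
  move=> Hg; exists (flip g); last by rewrite flipK.
  rewrite inE !ffunE eqxx (negbTE nuv).
  by move: Hg; rewrite inE; case: (g u); case: (g v).
have := cardsC A; rewrite -hC card_imset; last exact: (can_inj flipK).
by rewrite card_ffun card_bool => <-; rewrite muln2 -addnn.
Qed.

Lemma card_coll (P U : finType) (Q : {set P}) (x y : P -> U) :
  #|[set R : {ffun P -> {ffun U -> bool}} | [forall p in Q, R p (x p) == R p (y p)]]|
    * 2 ^ #|[set p in Q | x p != y p]| = 2 ^ (#|U| * #|P|).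
Proof.
pose F := fun p : P => if p \in Q then [pred g : {ffun U -> bool} | g (x p) == g (y p)]
                                 else predT.
have -> : #|[set R : {ffun P -> {ffun U -> bool}} | [forall p in Q, R p (x p) == R p (y p)]]|
          = #|(finfun.family F : simpl_pred {dffun forall p : P, {ffun U -> bool}})|.
  apply: eq_card => R; rewrite inE; apply/forall_inP/familyP.
    by move=> H p; rewrite /F; case: ifP => // /H.
  by move=> H p Hp; have := H p; rewrite /F Hp.
rewrite card_family foldrE big_image /=.
have -> : 2 ^ #|[set p in Q | x p != y p]| = \prod_(p : P) (if (p \in Q) && (x p != y p) then 2 else 1).
  by rewrite -big_mkcond /= prod_nat_const; apply: congr1; apply: eq_card => p; rewrite inE.
have -> : 2 ^ (#|U| * #|P|) = \prod_(p : P) 2 ^ #|U| by rewrite prod_nat_const expnM.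
rewrite -big_split /=.
apply: eq_bigr => p _; rewrite /F.
case: (p \in Q) => /=; last by rewrite muln1 cardT -cardE card_ffun card_bool.
case: (eqVneq (x p) (y p)) => [->|nxy] /=.
  rewrite muln1 -card_bool -card_ffun; apply: eq_card => g; exact: eqxx.
rewrite -(card_coll1 nxy); congr (_ * _); apply: eq_card => g; by rewrite inE.
Qed.

Lemma Rplus_assoc' : associative Rplus. Proof. by move=> x y z; rewrite Rplus_assoc. Qed.
HB.instance Definition _ := Monoid.isComLaw.Build R (0:R) Rplus Rplus_assoc' Rplus_comm Rplus_0_l.

Local Open Scope R_scope.

Lemma INR_sum (I : finType) (P : pred I) (f : I -> nat) :
  INR (\sum_(i | P i) f i)%N = \big[Rplus/0]_(i | P i) INR (f i).
Proof. apply: (big_morph INR) => //; exact: plus_INR. Qed.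

Lemma Rsum_le (I : finType) (P : pred I) (F G : I -> R) :
  (forall i, P i -> F i <= G i) ->
  \big[Rplus/0]_(i | P i) F i <= \big[Rplus/0]_(i | P i) G i.
Proof. move=> H; apply: big_ind2 => //; [lra | move=> *; lra]. Qed.

Lemma Rsum_mulr (I : finType) (P : pred I) (F : I -> R) c :
  \big[Rplus/0]_(i | P i) (F i * c) = (\big[Rplus/0]_(i | P i) F i) * c.
Proof. apply: (big_ind2 (fun x y => x = y * c)) => //; [lra| move=> *; subst; lra]. Qed.

Lemma Rsum_mulr1 (I : finType) (F : I -> R) c :
  \big[Rplus/0]_(i : I) (F i * c) = (\big[Rplus/0]_(i : I) F i) * c.
Proof. exact: Rsum_mulr. Qed.

Lemma Rsum_const (I : finType) (P : pred I) c :
  \big[Rplus/0]_(i | P i) c = INR #|P| * c.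
Proof.
rewrite -sum1_card INR_sum -Rsum_mulr; apply: eq_bigr => *; simpl; lra.
Qed.

Lemma Rsum_ge0 (I : finType) (P : pred I) (F : I -> R) :
  (forall i, P i -> 0 <= F i) -> 0 <= \big[Rplus/0]_(i | P i) F i.
Proof. move=> H; apply: (big_ind (fun x => 0 <= x)) => //; [lra| move=> *; lra]. Qed.

Lemma expn_pow m k : Nat.pow m k = (m ^ k)%N.
Proof. elim: k => [|k IH] //=; by rewrite expnS IH. Qed.

Definition inj_le (A B : finType) (h : (#|A| <= #|B|)%N) (x : A) : B :=
  enum_val (widen_ord h (enum_rank x)).

Lemma inj_le_inj (A B : finType) (h : (#|A| <= #|B|)%N) : injective (inj_le h).
Proof.
move=> x y /enum_val_inj /(congr1 val) /= /val_inj; exact: enum_rank_inj.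
Qed.

Section Code.
Variables (K : nat) (a : {set 'I_K} -> nat) (n m1 m2 Lb : nat) (k0 : 'I_K).
Hypotheses (hm1 : (0 < m1)%N) (hm2 : (0 < m2)%N) (hLb : (0 < Lb)%N).
Hypothesis hlast : forall i : 'I_K, is_last i = (i == k0).
Hypothesis hls : forall S, (0 < link_size a S)%N.

Definition b S := Nat.log2 (link_size a S ^ n).

Lemma b_le S : (2 ^ b S <= link_size a S ^ n)%N.
Proof.
have h : (0 < link_size a S ^ n)%coq_nat by apply/ltP; rewrite expn_gt0 hls.
have [h1 _] := Nat.log2_spec _ h.
by apply/leP; rewrite -expn_pow.
Qed.

Lemma card_le S : (#|{ffun 'I_(b S) -> bool}| <= #|{ffun 'I_n -> 'I_(link_size a S)}|)%N.
Proof. by rewrite !card_ffun !card_ord card_bool; exact: b_le. Qed.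

Definition embedS S : {ffun 'I_(b S) -> bool} -> {ffun 'I_n -> 'I_(link_size a S)} :=
  inj_le (card_le S).

Definition M := (\max_(S : {set 'I_K}) b S).+1.
Lemma b_ltM S : (b S < M)%N.
Proof. by rewrite ltnS; apply: (leq_bigmax S). Qed.

Local Notation Pos := ({set 'I_K} * 'I_M)%type.
Local Notation U := ('I_m1 * 'I_m2)%type.
Local Notation code := {ffun Pos -> {ffun U -> bool}}.

Definition blk (w1 : 'I_m1) : 'I_m1 := Ordinal (leq_ltn_trans (leq_div w1 Lb) (ltn_ord w1)).
Definition inp (S : {set 'I_K}) (w : U) : U := if k0 \in S then (blk w.1, w.2) else w.
Definition bits (R : code) (S : {set 'I_K}) (w : U) : {ffun 'I_(b S) -> bool} :=
  [ffun t : 'I_(b S) => R (S, inord t) (inp S w)].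
Definition enc (R : code) (w1 : 'I_m1) (w2 : 'I_m2) : chan_block a n :=
  fun S t => embedS (bits R S (w1, w2)) t.
Definition agreeb (i : 'I_K) (x y : chan_block a n) : bool :=
  [forall S : {set 'I_K}, [forall t : 'I_n, (i \in S) ==> (x S t == y S t)]].
Definition w0 : U := (Ordinal hm1, Ordinal hm2).
Definition dec (R : code) i (x : chan_block a n) : U :=
  odflt w0 [pick w : U | agreeb i (enc R w.1 w.2) x].
Definition d1 R i x := (dec R i x).1.
Definition d2 R i x := (dec R i x).2.

Lemma dec_obs R i (x y : chan_block a n) :
  (forall (S : {set 'I_K}) (t : 'I_n), i \in S -> x S t = y S t) -> dec R i x = dec R i y.
Proof.
move=> H; rewrite /dec; congr odflt; apply: eq_pick => w.
apply/forallP/forallP => H1 S; apply/forallP => t; have := forallP (H1 S) t;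
  case: (boolP (i \in S)) => //= iS /eqP ->; by rewrite H.
Qed.

Definition Q i := [set p : Pos | (i \in p.1) && (p.2 < b p.1)%N].
Definition coll (R : code) i (w w' : U) := [forall p in Q i, R p (inp p.1 w) == R p (inp p.1 w')].
Definition leader (x : 'I_m1) := (x %% Lb == 0)%N.
Definition cand i (w w' : U) := if i == k0 then (w'.2 != w.2) && leader w'.1 else w' != w.

Lemma agree_coll R i (w w' : U) :
  agreeb i (enc R w'.1 w'.2) (enc R w.1 w.2) -> coll R i w w'.
Proof.
move=> /forallP H; apply/forall_inP => -[S t]; rewrite inE /= => /andP [iS tb].
have E : embedS (bits R S w') = embedS (bits R S w).
  apply/ffunP => t'; have := forallP (H S) t'; rewrite iS /= => /eqP.
  by case: w w' {H} => w1 w2 [w1' w2'].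
move/inj_le_inj/ffunP: E => /(_ (Ordinal tb)); rewrite !ffunE.
have -> : inord (Ordinal tb) = t by apply: val_inj; rewrite /= inordK // (ltn_trans tb (b_ltM S)).
move=> ->; exact: eqxx.
Qed.

Definition leadr (x : 'I_m1) : 'I_m1 :=
  Ordinal (leq_ltn_trans (leq_divM x Lb) (ltn_ord x)).

Lemma blk_leadr x : blk (leadr x) = blk x.
Proof. by apply: val_inj; rewrite /= mulnK. Qed.

Lemma leader_leadr x : leader (leadr x).
Proof. by rewrite /leader /= modnMl. Qed.

Lemma one_le_sum (T : finType) (P : pred T) (F : T -> nat) x :
  P x -> (0 < F x)%N -> (1 <= \sum_(y | P y) F y)%N.
Proof. move=> Px Fx; rewrite (bigD1 x) //=; exact: leq_trans Fx (leq_addr _ _). Qed.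

Lemma err_bound R :
  (n_errors (enc R) (d1 R) (d2 R) <=
   \sum_(w : U) \sum_(i : 'I_K) \sum_(w' : U | cand i w w') coll R i w w')%N.
Proof.
rewrite /n_errors -sum1_card big_mkcond /=; apply: leq_sum => w _.
case: ifP => // /[!inE] /existsP [i Hi].
rewrite (bigD1 i) //=; apply: leq_trans (leq_addr _ _).
move: Hi; rewrite /d1 /d2 /dec.
case: pickP => [w'' Hag | Hn]; last first.
  exfalso; have := Hn w; rewrite /agreeb.
  by move/negbT/negP; apply; apply/forallP=> S; apply/forallP=> t; rewrite eqxx implybT.
rewrite /= hlast /cand.
have Hc := agree_coll Hag.
case: (eqVneq i k0) => [ik|nik] /=.
  move=> H2; apply: (@one_le_sum _ _ _ (leadr w''.1, w''.2)) => /=.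
    by rewrite H2 leader_leadr.
  move: Hc; rewrite /coll => /forall_inP Hc; rewrite lt0b; apply/forall_inP => p Hp.
  have := Hc p Hp; move: Hp; rewrite inE ik => /andP [kp _].
  by rewrite /inp kp /= blk_leadr.
move=> H; apply: (@one_le_sum _ _ _ w''); rewrite ?lt0b //.
by case: w H {Hag Hc} => w1 w2; case: w'' => x y /=; apply: contraTneq => -[-> ->]; rewrite !eqxx.
Qed.

Definition dd i (w w' : U) := #|[set p in Q i | inp p.1 w != inp p.1 w']|.

Lemma card_collR i w w' :
  (#|[set R : code | coll R i w w']| * 2 ^ dd i w w' = #|{: code}|)%N.
Proof.
have := card_coll (Q i) (fun p : Pos => inp p.1 w) (fun p : Pos => inp p.1 w').
rewrite card_ffun card_ffun card_bool -expnM mulnC => <-.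
rewrite /dd /coll mulnC; congr (_ * _)%N; apply: eq_card => R; by rewrite !inE.
Qed.

Lemma card_Q (P : pred {set 'I_K}) :
  #|[set p : Pos | P p.1 && (p.2 < b p.1)%N]| = (\sum_(S | P S) b S)%N.
Proof.
rewrite -sum1_card (eq_bigl (fun p : Pos => P p.1 && (p.2 < b p.1)%N)); last by move=> p; rewrite inE.
rewrite -(pair_big_dep P (fun S (t : 'I_M) => (t < b S)%N) (fun _ _ => 1%N)) /=.
apply: eq_bigr => S _.
rewrite (big_ord_narrow (F := fun _ => 1%N) (ltnW (b_ltM S))) sum1_card card_ord //.
Qed.

Lemma sum_bool_card (T : finType) (P : pred T) :
  (\sum_(x : T) (P x : nat) = #|[set x | P x]|)%N.
Proof. rewrite -sum1_card [RHS]big_mkcond /=; apply: eq_bigr => x _; rewrite inE; by case: (P x). Qed.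

Lemma INR_pow2_pos d : 0 < INR (2 ^ d).
Proof. by apply: lt_0_INR; apply/ltP; rewrite expn_gt0. Qed.

Lemma le_INR' (x y : nat) : (x <= y)%N -> INR x <= INR y.
Proof. by move/leP; apply: le_INR. Qed.

Lemma inv_pow_le d d' : (d' <= d)%N -> / INR (2 ^ d) <= / INR (2 ^ d').
Proof. by move=> h; apply: Rinv_le_contravar; [exact: INR_pow2_pos | apply: le_INR'; apply: leq_pexp2l]. Qed.

Lemma sum_codes :
  \big[Rplus/0]_(R : code) INR (n_errors (enc R) (d1 R) (d2 R)) <=
  INR #|{: code}| * \big[Rplus/0]_(w : U) \big[Rplus/0]_(i : 'I_K)
      \big[Rplus/0]_(w' : U | cand i w w') / INR (2 ^ dd i w w').
Proof.
apply: Rle_trans (Rsum_le (G := fun R => INR (\sum_(w : U) \sum_(i : 'I_K) \sum_(w' : U | cand i w w') coll R i w w')) _) _.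
  by move=> R _; apply: le_INR'; apply: err_bound.
rewrite -INR_sum exchange_big /= INR_sum [X in _ <= X]Rmult_comm. rewrite -Rsum_mulr1.
apply: Rsum_le => w _; rewrite exchange_big /= INR_sum -Rsum_mulr1.
apply: Rsum_le => i _; rewrite exchange_big /= INR_sum -Rsum_mulr.
apply: Rsum_le => w' _; rewrite sum_bool_card.
have := card_collR i w w'; move/(congr1 INR); rewrite mult_INR => <-.
have := INR_pow2_pos (dd i w w'); move=> h; right; rewrite Rmult_comm Rmult_assoc Rinv_r ?Rmult_1_r //; lra.
Qed.

Definition Qb i := [set p : Pos | ((i \in p.1) && (k0 \notin p.1)) && (p.2 < b p.1)%N].
Definition nlead := #|[set x : 'I_m1 | leader x]|.

Lemma bound_last w :
  \big[Rplus/0]_(w' : U | cand k0 w w') / INR (2 ^ dd k0 w w') <=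
  INR (nlead * (m2 - 1)) * / INR (2 ^ #|Q k0|).
Proof.
have -> : \big[Rplus/0]_(w' : U | cand k0 w w') / INR (2 ^ dd k0 w w') =
          \big[Rplus/0]_(w' : U | cand k0 w w') / INR (2 ^ #|Q k0|).
  apply: eq_bigr => w'; rewrite /cand eqxx => /andP [ne _]; congr (/ INR (2 ^ _)).
  rewrite /dd; apply: eq_card => p; rewrite !inE.
  rewrite /inp; case: (k0 \in p.1) => //=; case: (_ < _)%N => //=.
  by apply/eqP => -[_ E]; move: ne; rewrite E eqxx.
rewrite Rsum_const; apply: Rmult_le_compat_r; first by apply/Rlt_le/Rinv_0_lt_compat/INR_pow2_pos.
apply: le_INR'; rewrite leq_eqVlt; apply/orP; left; apply/eqP.
rewrite /nlead subn1 -[m2 in (m2.-1)]card_ord -(cardC1 w.2) -cardX.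
apply: eq_card => -[x y]; rewrite !inE /cand eqxx /= andbC.
by [].
Qed.

Definition same (w w' : U) := (blk w'.1 == blk w.1) && (w'.2 == w.2).

Lemma card_same w :
  (#|[pred w' : U | (w' != w) && same w w']| <= Lb - 1)%N.
Proof.
pose f (w' : U) : 'I_Lb := Ordinal (ltn_pmod w'.1 hLb).
rewrite -(@card_in_imset _ _ f); last first.
  move=> [x1 x2] [y1 y2]; rewrite !inE /same /= => /andP [_ /andP [/eqP bx /eqP ex]]
    /andP [_ /andP [/eqP b_y /eqP ey]] /(congr1 val) /= hm.
  have hb : (x1 %/ Lb = y1 %/ Lb)%N by move: bx b_y => /(congr1 val) /= -> /(congr1 val) /= ->.
  have hx : x1 = y1 by apply: val_inj; rewrite /= (divn_eq x1 Lb) (divn_eq y1 Lb) hb hm.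
  by rewrite hx ex ey.
rewrite subn1 -[Lb in Lb.-1]card_ord -(cardC1 (f w)); apply: subset_leq_card.
apply/subsetP => y /imsetP [[x1 x2]]; rewrite !inE /same /= => /andP [ne /andP [/eqP bx /eqP ex]] ->.
apply: contra ne => /eqP /(congr1 val) /= hm; apply/eqP.
have hb : (x1 %/ Lb = w.1 %/ Lb)%N by move: bx => /(congr1 val).
have hx : x1 = w.1 by apply: val_inj; rewrite /= (divn_eq x1 Lb) (divn_eq w.1 Lb) hb hm.
by rewrite hx ex; case: w {hb hx hm bx ex}.
Qed.

Lemma bound_other i w : i != k0 ->
  \big[Rplus/0]_(w' : U | cand i w w') / INR (2 ^ dd i w w') <=
  INR (m1 * m2 - 1) * / INR (2 ^ #|Q i|) + INR (Lb - 1) * / INR (2 ^ #|Qb i|).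
Proof.
move=> nik; rewrite /cand (negbTE nik).
have hQ := Rlt_le _ _ (Rinv_0_lt_compat _ (INR_pow2_pos #|Q i|)).
have hQb := Rlt_le _ _ (Rinv_0_lt_compat _ (INR_pow2_pos #|Qb i|)).
apply: Rle_trans (Rsum_le (G := fun w' => (if same w w' then 0 else / INR (2 ^ #|Q i|)) +
   (if same w w' then / INR (2 ^ #|Qb i|) else 0)) _) _.
  move=> w' ne; case sm: (same w w') => /=; [rewrite Rplus_0_l | rewrite Rplus_0_r];
    apply: inv_pow_le; apply: subset_leq_card; apply/subsetP => p; rewrite !inE.
    move=> /andP [/andP [ip kp] tb]; rewrite ip tb /= /inp (negbTE kp).
    by rewrite eq_sym.
  move=> /andP [ip tb]; rewrite ip tb /= /inp; case: (k0 \in p.1); last by rewrite eq_sym.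
  apply: contraFN sm => /eqP E; rewrite /same; apply/andP; split; apply/eqP.
    exact: (esym (congr1 fst E)).
  exact: (esym (congr1 snd E)).
rewrite big_split /=; apply: Rplus_le_compat.
  apply: Rle_trans (Rsum_le (G := fun _ => / INR (2 ^ #|Q i|)) _) _.
    by move=> w' _; case: (same w w'); [exact: hQ | exact: Rle_refl].
  rewrite Rsum_const; apply: Rmult_le_compat_r => //; apply: le_INR'.
  have -> : (m1 * m2 - 1 = #|{: U}|.-1)%N by rewrite card_prod !card_ord subn1.
  rewrite -(cardC1 w); exact: leqnn.
rewrite -big_mkcondr Rsum_const; apply: Rmult_le_compat_r => //; apply: le_INR'.
exact: card_same.
Qed.

Definition Ebound :=
  INR (nlead * (m2 - 1)) * / INR (2 ^ #|Q k0|) +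
  \big[Rplus/0]_(i : 'I_K | i != k0)
     (INR (m1 * m2 - 1) * / INR (2 ^ #|Q i|) + INR (Lb - 1) * / INR (2 ^ #|Qb i|)).

Lemma averaging (T : finType) (x0 : T) (f : T -> R) B :
  \big[Rplus/0]_(x : T) f x <= INR #|{: T}| * B -> exists x, f x <= B.
Proof.
move=> H; apply: NNPP => Hn.
have Hlt : forall x, B < f x by move=> x; apply: Rnot_le_lt => Hx; apply: Hn; exists x.
move: H; rewrite -Rsum_const (bigD1 x0) //= [X in _ <= X](bigD1 x0) //=.
have := Rsum_le (P := fun x => x != x0) (F := fun _ => B) (G := f) (fun x _ => Rlt_le _ _ (Hlt x)).
have := Hlt x0; lra.
Qed.

Lemma code_exists : exists R : code,
  err_prob (enc R) (d1 R) (d2 R) <= Ebound /\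
  (forall i, observes i (d1 R i)) /\ (forall i, observes i (d2 R i)).
Proof.
have Hs := sum_codes.
have Hw : forall w : U, \big[Rplus/0]_(i : 'I_K) \big[Rplus/0]_(w' : U | cand i w w')
      / INR (2 ^ dd i w w') <= Ebound.
  move=> w; rewrite (bigD1 k0) //=; apply: Rplus_le_compat; first exact: bound_last.
  by apply: Rsum_le => i nik; apply: bound_other.
have Hs2 := Rle_trans _ _ _ Hs (Rmult_le_compat_l _ _ _ (pos_INR _) (Rsum_le (fun w _ => Hw w))).
rewrite Rsum_const in Hs2.
have [R HR] := averaging [ffun _ => [ffun _ => true]] Hs2.
exists R; split; last by split => i x y H; rewrite /d1 /d2 (dec_obs R H).
rewrite /err_prob.
have hpos : 0 < INR (m1 * m2) by apply: lt_0_INR; apply/ltP; rewrite muln_gt0 hm1 hm2.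
apply: (Rmult_le_reg_r (INR (m1 * m2))) => //.
rewrite /Rdiv Rmult_assoc Rinv_l; last lra.
rewrite Rmult_1_r; move: HR; rewrite card_prod !card_ord mult_INR; nra.
Qed.

End Code.

Local Open Scope R_scope.

Lemma Rceil_bounds y : y <= IZR (Rceil y) < y + 1.
Proof.
rewrite /Rceil /Int_part opp_IZR minus_IZR.
have [h1 h2] := archimed (- y); lra.
Qed.

Definition P2 x := Rpower 2 x.

Lemma P2_pos x : 0 < P2 x.
Proof. rewrite /P2 /Rpower; exact: exp_pos. Qed.

Lemma P2_le x y : x <= y -> P2 x <= P2 y.
Proof. move=> h; apply: Rle_Rpower => //; lra. Qed.

Lemma P2_ge1 x : 0 <= x -> 1 <= P2 x.
Proof. move=> h; rewrite -(Rpower_O 2); [exact: P2_le | lra]. Qed.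

Lemma P2_plus x y : P2 (x + y) = P2 x * P2 y.
Proof. exact: Rpower_plus. Qed.

Lemma P2_opp x : P2 (- x) = / P2 x.
Proof. exact: Rpower_Ropp. Qed.

Lemma INR_P2 (q : nat) : INR (2 ^ q)%N = P2 (INR q).
Proof.
rewrite /P2 Rpower_pow; last lra.
rewrite -expn_pow pow_INR; congr (_ ^ _); simpl; ring.
Qed.

Lemma msg_bounds n r : 0 <= r ->
  (0 < msg_size n r)%N /\ P2 (INR n * r) <= INR (msg_size n r) < P2 (INR n * r) + 1.
Proof.
move=> hr; have hy := P2_ge1 (Rmult_le_pos _ _ (pos_INR n) hr).
have [b1 b2] := Rceil_bounds (P2 (INR n * r)).
have hz : (0 <= Rceil (P2 (INR n * r)))%Z.
  apply: le_IZR; rewrite /P2 in hy b1 *; lra.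
have E : INR (msg_size n r) = IZR (Rceil (P2 (INR n * r))).
  by rewrite /msg_size INR_IZR_INZ Z2Nat.id.
rewrite E; split; last by rewrite /P2 in b1 b2 *; lra.
apply/ltP; apply: INR_lt; rewrite E /=; rewrite /P2 in hy b1 *; lra.
Qed.

Section Caps.
Variables (K : nat) (a : {set 'I_K} -> nat) (n : nat) (k0 : 'I_K).
Hypothesis ha : forall S : {set 'I_K}, S != set0 -> (0 < a S)%N.

Definition N0 := INR #|{: {set 'I_K}}|.
Definition Cb (i : 'I_K) := \big[Rplus/0]_(T : {set 'I_K} | ((T != set0) && (i \in T)) && (k0 \notin T)) cap a T.

Lemma cap_ge0 S : S != set0 -> 0 <= cap a S.
Proof.
move=> hS; rewrite /cap; apply: Rmult_le_pos; last first.
  by apply/Rlt_le/Rinv_0_lt_compat; rewrite -ln_1; apply: ln_increasing; lra.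
rewrite -ln_1; have h1 : 1 <= INR (a S) by apply: (le_INR 1); apply/leP; exact: ha.
case: (Rle_lt_or_eq_dec _ _ h1) => h; last by rewrite -h; lra.
by apply/Rlt_le/ln_increasing; lra.
Qed.

Lemma b_ge S : S != set0 -> INR n * cap a S - 1 <= INR (b a n S).
Proof.
move=> hS; have hls : (0 < link_size a S)%N by rewrite /link_size (negbTE hS) ha.
have h : (0 < link_size a S ^ n)%coq_nat by apply/ltP; rewrite expn_gt0 hls.
have [_ h2] := Nat.log2_spec _ h.
move/ltP: h2; rewrite expn_pow -/(b a n S) => h2.
have h3 := lt_INR _ _ (elimT ltP h2).
rewrite INR_P2 -expn_pow pow_INR in h3.
have hapos : 0 < INR (link_size a S) by apply: lt_0_INR; apply/ltP.
have h4 := ln_increasing _ _ (pow_lt _ n hapos) h3.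
rewrite ln_pow // /P2 ln_Rpower /link_size (negbTE hS) in h4.
have hl2 : 0 < ln 2 by rewrite -ln_1; apply: ln_increasing; lra.
rewrite /cap; apply: (Rmult_le_reg_r (ln 2)) => //.
rewrite Rmult_minus_distr_r Rmult_assoc /Rdiv Rmult_assoc Rinv_l; last lra.
rewrite S_INR in h4; nra.
Qed.
End Caps.

Lemma Rsum_lin (I : finType) (P : pred I) (f : I -> R) c :
  \big[Rplus/0]_(i | P i) (c * f i - 1) = c * \big[Rplus/0]_(i | P i) f i - INR #|P|.
Proof.
have -> : \big[Rplus/0]_(i | P i) (c * f i - 1) = \big[Rplus/0]_(i | P i) (f i * c + (-1)).
  by apply: eq_bigr => i _; ring.
rewrite big_split /= Rsum_mulr Rsum_const; ring.
Qed.

Section Caps2.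
Variables (K : nat) (a : {set 'I_K} -> nat) (n : nat) (k0 : 'I_K).
Hypothesis ha : forall S : {set 'I_K}, S != set0 -> (0 < a S)%N.

Lemma sum_b_ge (P : pred {set 'I_K}) :
  (forall S, P S -> S != set0) ->
  INR n * \big[Rplus/0]_(S | P S) cap a S - N0 K <= INR (\sum_(S | P S) b a n S)%N.
Proof.
move=> HP; rewrite INR_sum.
apply: Rle_trans (Rsum_le (F := fun S => INR n * cap a S - 1) _); last first.
  by move=> S PS; apply: b_ge => //; exact: HP.
rewrite Rsum_lin; apply: Rplus_le_compat_l; apply: Ropp_le_contravar.
by apply: le_INR'; apply: max_card.
Qed.

Lemma Q_ge i : INR n * capW a i - N0 K <= INR #|Q a n i|.
Proof.
have -> : #|Q a n i| = (\sum_(S : {set 'I_K} | i \in S) b a n S)%N by exact: (card_Q a n (fun S : {set 'I_K} => i \in S)).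
have -> : capW a i = \big[Rplus/0]_(S : {set 'I_K} | i \in S) cap a S.
  rewrite /capW; apply: eq_bigl => S; case iS: (i \in S); rewrite ?andbF ?andbT //.
  by apply/set0Pn; exists i.
apply: sum_b_ge => S iS; by apply/set0Pn; exists i.
Qed.

Lemma Qb_ge i : INR n * Cb a k0 i - N0 K <= INR #|Qb a n k0 i|.
Proof.
have -> : #|Qb a n k0 i| = (\sum_(S : {set 'I_K} | ((S != set0) && (i \in S)) && (k0 \notin S)) b a n S)%N.
  rewrite -(card_Q a n (fun S : {set 'I_K} => ((S != set0) && (i \in S)) && (k0 \notin S))).
  apply: eq_card => p; rewrite !inE; case iS: (i \in p.1); rewrite ?andbF //=.
  by have -> : (p.1 != set0) by apply/set0Pn; exists i.
apply: sum_b_ge => S /andP [/andP [] //].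
Qed.
End Caps2.

Lemma nlead_le m1 Lb : (0 < Lb)%N -> INR (nlead m1 Lb) <= INR m1 / INR Lb + 1.
Proof.
move=> hLb.
have h1 : (nlead m1 Lb <= ((m1 - 1) %/ Lb).+1)%N.
  have hx : forall x : 'I_m1, (x %/ Lb < ((m1 - 1) %/ Lb).+1)%N.
    move=> x; rewrite ltnS; apply: leq_div2r; rewrite subn1 -ltnS prednK //.
    exact: leq_ltn_trans (leq0n x) (ltn_ord x).
  pose f (x : 'I_m1) : 'I_(((m1 - 1) %/ Lb).+1) := Ordinal (hx x).
  rewrite /nlead -(@card_in_imset _ _ f); last first.
    move=> x y; rewrite !inE /leader => /eqP hx0 /eqP hy0 /(congr1 val) /= hq.
    by apply: val_inj; rewrite /= (divn_eq x Lb) (divn_eq y Lb) hx0 hy0 hq.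
  by rewrite -[X in (_ <= X)%N]card_ord; apply: max_card.
have hL : 0 < INR Lb by apply: lt_0_INR; apply/ltP.
apply: Rle_trans (le_INR' h1) _; rewrite S_INR; apply: Rplus_le_compat_r.
apply: (Rmult_le_reg_r (INR Lb)) => //; rewrite /Rdiv Rmult_assoc Rinv_l ?Rmult_1_r; last lra.
rewrite -mult_INR; apply: le_INR'; apply: leq_trans (leq_divM _ _) _; exact: leq_subr.
Qed.

Lemma INR_toNat z : IZR z <= INR (Z.to_nat z).
Proof.
case: (Z_le_gt_dec 0 z) => h; first by rewrite INR_IZR_INZ Z2Nat.id; [exact: Rle_refl | exact: h].
have := IZR_lt _ _ (Z.gt_lt _ _ h); have := pos_INR (Z.to_nat z); lra.
Qed.

Lemma ev_decay c d y : 0 < d -> 0 < y ->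
  exists N, forall n, (N <= n)%N -> c * P2 (- (INR n * d)) <= y.
Proof.
move=> hd hy.
have hl2 : 0 < ln 2 by rewrite -ln_1; apply: ln_increasing; lra.
have hL : 0 < d * ln 2 by nra.
exists (Z.to_nat (up (Rabs c / (y * (d * ln 2))))) => n hn.
have h1 := INR_toNat (up (Rabs c / (y * (d * ln 2)))).
have [h2 _] := archimed (Rabs c / (y * (d * ln 2))).
have h3 := le_INR' hn.
have hn' : Rabs c / (y * (d * ln 2)) < INR n by lra.
have hc : Rabs c < y * (d * ln 2) * INR n.
  have hp : 0 < y * (d * ln 2) by nra.
  have E : Rabs c = Rabs c / (y * (d * ln 2)) * (y * (d * ln 2)) by field; lra.
  rewrite [X in X < _]E [X in _ < X]Rmult_comm; exact: Rmult_lt_compat_r hp hn'.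
have he : 1 + INR n * d * ln 2 <= P2 (INR n * d).
  by rewrite /P2 /Rpower; apply: exp_ineq1_le.
rewrite P2_opp; have hp := P2_pos (INR n * d).
apply: (Rmult_le_reg_r (P2 (INR n * d))) => //.
rewrite Rmult_assoc Rinv_l ?Rmult_1_r; last lra.
have := Rle_abs c; nra.
Qed.

Definition ev (P : nat -> Prop) := exists N, forall n, (N <= n)%N -> P n.

Lemma ev_and P Q : ev P -> ev Q -> ev (fun n => P n /\ Q n).
Proof.
move=> [N1 H1] [N2 H2]; exists (maxn N1 N2) => n hn; split.
  by apply: H1; apply: leq_trans hn; apply: leq_maxl.
by apply: H2; apply: leq_trans hn; apply: leq_maxr.
Qed.

Lemma ev_fin (T : finType) (P : T -> nat -> Prop) :
  (forall x, ev (P x)) -> ev (fun n => forall x, P x n).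
Proof.
move=> H.
suff : forall s : seq T, ev (fun n => forall x, x \in s -> P x n).
  by case/(_ (enum T)) => N HN; exists N => n hn x; apply: HN => //; rewrite mem_enum.
elim=> [|y s [N HN]]; first by exists 0%N.
have [N1 H1] := H y; exists (maxn N N1) => n hn x; rewrite inE => /orP [/eqP ->|xs].
  by apply: H1; apply: leq_trans hn; apply: leq_maxr.
by apply: HN => //; apply: leq_trans hn; apply: leq_maxl.
Qed.

Lemma msg_zero n : msg_size n 0 = 1%N.
Proof.
have [h0 [_ h2]] := msg_bounds n (Rle_refl 0).
rewrite Rmult_0_r /P2 Rpower_O in h2; last lra.
apply/eqP; rewrite eqn_leq h0 andbT; rewrite -ltnS; apply/ltP; apply: INR_lt; simpl; lra.
Qed.

Lemma INR_sub1 m : (0 < m)%N -> INR (m - 1) = INR m - 1.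
Proof. by move=> h; rewrite minus_INR //; apply/leP. Qed.

Lemma inv_Q_le (q : nat) x : x <= INR q -> / INR (2 ^ q)%N <= P2 (- x).
Proof. by move=> h; rewrite INR_P2 -P2_opp; apply: P2_le; lra. Qed.

Lemma msg_le2 n r : 0 <= r -> INR (msg_size n r) <= 2 * P2 (INR n * r).
Proof.
move=> hr; have [_ [_ h]] := msg_bounds n hr.
have := P2_ge1 (Rmult_le_pos _ _ (pos_INR n) hr); lra.
Qed.

Lemma msg_sub1 n r : 0 <= r -> INR (msg_size n r - 1) <= P2 (INR n * r).
Proof.
move=> hr; have [h0 [_ h]] := msg_bounds n hr; rewrite INR_sub1 //; lra.
Qed.

Lemma P2_mult3 x y z : P2 x * P2 y * P2 z = P2 (x + y + z).
Proof. by rewrite !P2_plus. Qed.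

Section Terms.
Variables (K : nat) (a : {set 'I_K} -> nat) (k0 : 'I_K).
Hypothesis ha : forall S : {set 'I_K}, S != set0 -> (0 < a S)%N.
Variables (r1 r2 mu e : R).
Hypotheses (hmu : 0 <= mu) (hmu1 : mu <= r1) (hr2 : 0 <= r2) (he : 0 < e).

Let hr1 : 0 <= r1. Proof. lra. Qed.

Lemma evTK : (0 < r2 -> r1 - mu + r2 < capW a k0) ->
  ev (fun n => INR (nlead (msg_size n r1) (msg_size n mu) * (msg_size n r2 - 1)) *
               / INR (2 ^ #|Q a n k0|) <= e).
Proof.
move=> hgap; case: (Rle_lt_or_eq_dec _ _ hr2) => h2; last first.
  by exists 0%N => n _; rewrite -h2 msg_zero subnn muln0 /= Rmult_0_l; lra.
have hd : 0 < capW a k0 - (r1 - mu + r2) by have := hgap h2; lra.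
have [N HN] := ev_decay (3 * P2 (N0 K)) hd he.
exists N => n hn; apply: Rle_trans (HN n hn).
have [hL0 [hL1 _]] := msg_bounds n hmu.
have hp := P2_pos (INR n * mu).
have hn0 := pos_INR n.
rewrite mult_INR.
have A : INR (nlead (msg_size n r1) (msg_size n mu)) <= 3 * P2 (INR n * (r1 - mu)).
  apply: Rle_trans (nlead_le _ hL0) _.
  have h1 := msg_le2 n hr1.
  have h3 : INR (msg_size n r1) / INR (msg_size n mu) <= 2 * P2 (INR n * (r1 - mu)).
    apply: (Rmult_le_reg_r (INR (msg_size n mu))); first lra.
    rewrite /Rdiv Rmult_assoc Rinv_l ?Rmult_1_r; last lra.
    apply: Rle_trans h1 _; rewrite Rmult_assoc; apply: Rmult_le_compat_l; first lra.
    apply: Rle_trans (Rmult_le_compat_l _ _ _ (Rlt_le _ _ (P2_pos _)) hL1).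
    by rewrite -P2_plus; right; congr P2; ring.
  have := P2_ge1 (Rmult_le_pos _ _ hn0 (Rge_le _ _ (Rge_minus _ _ (Rle_ge _ _ hmu1)))); lra.
have B := msg_sub1 n hr2.
have C := inv_Q_le (Q_ge n ha k0).
apply: Rle_trans (Rmult_le_compat _ _ _ _ _ _ (Rmult_le_compat _ _ _ _ (pos_INR _) (pos_INR _) A B) C) _.
- by apply: Rmult_le_pos; apply: pos_INR.
- by apply/Rlt_le/Rinv_0_lt_compat/INR_pow2_pos.
rewrite !Rmult_assoc -P2_plus -P2_plus -P2_plus; right.
by congr (3 * P2 _); ring.
Qed.

Lemma evT1 j : (0 < r1 + r2 -> r1 + r2 < capW a j) ->
  ev (fun n => INR (msg_size n r1 * msg_size n r2 - 1) * / INR (2 ^ #|Q a n j|) <= e).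
Proof.
move=> hgap; case: (Rle_lt_or_eq_dec 0 (r1 + r2)) => [|h2|h2]; first lra; last first.
  have e1 : r1 = 0 by lra.
  have e2 : r2 = 0 by lra.
  by exists 0%N => n _; rewrite e1 e2 !msg_zero /= Rmult_0_l; lra.
have hd : 0 < capW a j - (r1 + r2) by have := hgap h2; lra.
have [N HN] := ev_decay (4 * P2 (N0 K)) hd he.
exists N => n hn; apply: Rle_trans (HN n hn).
have hn0 := pos_INR n.
have A : INR (msg_size n r1 * msg_size n r2 - 1) <= 4 * P2 (INR n * (r1 + r2)).
  apply: Rle_trans (le_INR' (leq_subr 1 _)) _; rewrite mult_INR.
  have h1 := msg_le2 n hr1; have h3 := msg_le2 n hr2.
  apply: Rle_trans (Rmult_le_compat _ _ _ _ (pos_INR _) (pos_INR _) h1 h3) _.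
  have -> : INR n * (r1 + r2) = INR n * r1 + INR n * r2 by ring.
  rewrite P2_plus; right; ring.
have C := inv_Q_le (Q_ge n ha j).
apply: Rle_trans (Rmult_le_compat _ _ _ _ (pos_INR _) _ A C) _.
- by apply/Rlt_le/Rinv_0_lt_compat/INR_pow2_pos.
rewrite !Rmult_assoc -P2_plus -P2_plus; right.
by congr (_ * (_ * P2 _)); ring.
Qed.

Lemma evT2 j : (0 < mu -> mu < Cb a k0 j) ->
  ev (fun n => INR (msg_size n mu - 1) * / INR (2 ^ #|Qb a n k0 j|) <= e).
Proof.
move=> hgap; case: (Rle_lt_or_eq_dec _ _ hmu) => h2; last first.
  by exists 0%N => n _; rewrite -h2 msg_zero /= Rmult_0_l; lra.
have hd : 0 < Cb a k0 j - mu by have := hgap h2; lra.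
have [N HN] := ev_decay (P2 (N0 K)) hd he.
exists N => n hn; apply: Rle_trans (HN n hn).
have A := msg_sub1 n hmu.
have C := inv_Q_le (Qb_ge n k0 ha j).
apply: Rle_trans (Rmult_le_compat _ _ _ _ (pos_INR _) _ A C) _.
- by apply/Rlt_le/Rinv_0_lt_compat/INR_pow2_pos.
rewrite -P2_plus -P2_plus; right.
by congr P2; ring.
Qed.
End Terms.

Lemma hls_of K (a : {set 'I_K} -> nat) :
  (forall S : {set 'I_K}, S != set0 -> (0 < a S)%N) -> forall S, (0 < link_size a S)%N.
Proof. by move=> ha S; rewrite /link_size; case: ifP => // /negbT; apply: ha. Qed.

Lemma achv K (a : {set 'I_K} -> nat) (k0 : 'I_K)
  (ha : forall S : {set 'I_K}, S != set0 -> (0 < a S)%N)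
  (hlast : forall i : 'I_K, is_last i = (i == k0)) r1 r2 mu :
  0 <= mu -> mu <= r1 -> 0 <= r2 ->
  (0 < r2 -> r1 - mu + r2 < capW a k0) ->
  (forall j, j != k0 -> 0 < r1 + r2 -> r1 + r2 < capW a j) ->
  (forall j, j != k0 -> 0 < mu -> mu < Cb a k0 j) ->
  achievable a r1 r2.
Proof.
move=> hmu hmu1 hr2 gK g1 g2.
split; [lra | split; [lra | move=> eps heps]].
have hK0 : 0 <= INR K by apply: pos_INR.
pose e := eps / (2 * INR K + 1).
have he : 0 < e by rewrite /e; apply: Rdiv_lt_0_compat; lra.
have H1 := evTK ha hmu hmu1 hr2 he gK.
have H2 : ev (fun n => forall j : 'I_K, j != k0 ->
   INR (msg_size n r1 * msg_size n r2 - 1) * / INR (2 ^ #|Q a n j|) <= e).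
  apply: ev_fin => j; case: (eqVneq j k0) => [->|nj]; first by exists 0%N.
  have [N HN] := evT1 ha hmu hmu1 hr2 he (g1 j nj); by exists N => n hn _; apply: HN.
have H3 : ev (fun n => forall j : 'I_K, j != k0 ->
   INR (msg_size n mu - 1) * / INR (2 ^ #|Qb a n k0 j|) <= e).
  apply: ev_fin => j; case: (eqVneq j k0) => [->|nj]; first by exists 0%N.
  have [N HN] := evT2 ha hmu he (g2 j nj); by exists N => n hn _; apply: HN.
have [N HN] := ev_and H1 (ev_and H2 H3).
exists N => n hn; have [A [B C]] := HN n hn.
have [hm1 _] := msg_bounds n (Rle_trans _ _ _ hmu hmu1).
have [hm2 _] := msg_bounds n hr2.
have [hLb _] := msg_bounds n hmu.
have [R [Herr [Ho1 Ho2]]] := code_exists n hm1 hm2 hLb hlast (hls_of ha).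
do 3 eexists; split; [exact: Ho1 | split; [exact: Ho2 | ]].
apply: Rle_trans Herr _; rewrite /Ebound.
apply: Rle_trans (Rplus_le_compat _ _ _ _ A (Rsum_le (G := fun _ => e + e) (fun i hi => Rplus_le_compat _ _ _ _ (B i hi) (C i hi)))) _.
rewrite Rsum_const.
match goal with |- context [INR #|?P|] =>
  have hc : INR #|P| <= INR K by apply: le_INR'; rewrite -[X in (_ <= X)%N]card_ord; apply: max_card end.
have : e * (2 * INR K + 1) = eps by rewrite /e; field; lra.
have := Rmult_le_compat_r e _ _ (Rlt_le _ _ he) hc.
clearbody e; move: (INR #|_|) => c; move=> h1 h2; lra.
Qed.

Local Open Scope R_scope.

Section Conv.
Variables (K : nat) (a : {set 'I_K} -> nat) (n : nat) (i : 'I_K).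
Hypothesis ha : forall S : {set 'I_K}, S != set0 -> (0 < a S)%N.

Definition ls' (S : {set 'I_K}) := if i \in S then link_size a S else 1%N.
Lemma ls'_pos S : (0 < ls' S)%N.
Proof. by rewrite /ls'; case: ifP => // _; apply: hls_of. Qed.

Definition Obs := {dffun forall S : {set 'I_K}, {ffun 'I_n -> 'I_(ls' S)}}.
Definition obs (x : chan_block a n) : Obs :=
  [ffun S => [ffun t => Ordinal (ltn_pmod (x S t) (ls'_pos S))]].

Lemma obs_agree x y : obs x = obs y -> forall (S : {set 'I_K}) (t : 'I_n), i \in S -> x S t = y S t.
Proof.
move=> E S t iS; have := congr1 (fun f : Obs => f S t) E; rewrite /obs !ffunE /=.
move/(congr1 val) => /=; rewrite !modn_small; first by move/val_inj.
  by rewrite /ls' iS.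
by rewrite /ls' iS.
Qed.

Lemma card_Obs : INR #|{: Obs}| = P2 (INR n * capW a i).
Proof.
rewrite card_dep_ffun foldrE big_image /=.
have -> : capW a i = \big[Rplus/0]_(S : {set 'I_K}) (if i \in S then cap a S else 0).
  rewrite /capW -big_mkcond /=; apply: eq_bigl => S; case iS: (i \in S); rewrite ?andbF ?andbT //.
  by apply/set0Pn; exists i.
rewrite -Rmult_comm -Rsum_mulr.
apply: (big_ind2 (fun (x : nat) (y : R) => INR x = P2 y)).
- by rewrite /P2 Rpower_O //; lra.
- by move=> x1 x2 y1 y2 h1 h2; rewrite mult_INR h1 h2 P2_plus.
move=> S _; rewrite card_ffun !card_ord /ls'.
case iS: (i \in S); last by rewrite exp1n Rmult_0_l /P2 Rpower_O //=; lra.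
have hS : S != set0 by apply/set0Pn; exists i.
have hpos : 0 < INR (a S) by apply: lt_0_INR; apply/ltP; apply: ha.
rewrite /link_size (negbTE hS) -expn_pow pow_INR -Rpower_pow // /P2 /Rpower /cap.
have hl2 : 0 < ln 2 by rewrite -ln_1; apply: ln_increasing; lra.
congr exp; field; lra.
Qed.
End Conv.

Section Conv2.
Variables (K : nat) (a : {set 'I_K} -> nat) (n m1 m2 : nat).
Hypothesis ha : forall S : {set 'I_K}, S != set0 -> (0 < a S)%N.
Variables (enc : 'I_m1 -> 'I_m2 -> chan_block a n)
  (d1 : 'I_K -> chan_block a n -> 'I_m1) (d2 : 'I_K -> chan_block a n -> 'I_m2).

Definition Eset := [set w : 'I_m1 * 'I_m2 |
      [exists i : 'I_K,
         ((~~ is_last i) && (d1 i (enc w.1 w.2) != w.1))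
         || (d2 i (enc w.1 w.2) != w.2)]].

Lemma nerr_E : (n_errors enc d1 d2 + #|~: Eset| = m1 * m2)%N.
Proof. by rewrite /n_errors -/Eset cardsC card_prod !card_ord. Qed.

Lemma correct_dec w i : w \in ~: Eset ->
  d2 i (enc w.1 w.2) = w.2 /\ (~~ is_last i -> d1 i (enc w.1 w.2) = w.1).
Proof.
rewrite !inE => /existsPn /(_ i); rewrite negb_or => /andP [h1 /negPn /eqP h2].
split => // nl; move: h1; rewrite nl /=; by move/negPn/eqP.
Qed.

Lemma nerr_ge_any i : observes i (d2 i) ->
  INR (m1 * m2) - INR m1 * P2 (INR n * capW a i) <= INR (n_errors enc d1 d2).
Proof.
move=> ho.
pose f (w : 'I_m1 * 'I_m2) : 'I_m1 * Obs a n i := (w.1, @obs _ a n i ha (enc w.1 w.2)).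
have h : (#|~: Eset| <= m1 * #|{: Obs a n i}|)%N.
  rewrite -(@card_in_imset _ _ f); last first.
    move=> [x1 x2] [y1 y2] hx hy [e1 e2]; subst y1.
    have [hx2 _] := correct_dec i hx; have [hy2 _] := correct_dec i hy.
    simpl in hx2, hy2; rewrite -hx2 -hy2; congr pair; apply: ho.
    move=> S t; exact: (obs_agree e2).
  rewrite -[X in (_ <= X * _)%N]card_ord -card_prod; exact: max_card.
have := nerr_E; move/(congr1 INR); rewrite plus_INR => E.
have := le_INR' h; rewrite mult_INR (card_Obs n i ha); lra.
Qed.

Lemma nerr_ge_nl i : ~~ is_last i -> observes i (d1 i) -> observes i (d2 i) ->
  INR (m1 * m2) - P2 (INR n * capW a i) <= INR (n_errors enc d1 d2).
Proof.
move=> nl ho1 ho2.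
pose f (w : 'I_m1 * 'I_m2) : Obs a n i := @obs _ a n i ha (enc w.1 w.2).
have h : (#|~: Eset| <= #|{: Obs a n i}|)%N.
  rewrite -(@card_in_imset _ _ f); last first.
    move=> [x1 x2] [y1 y2] hx hy e; rewrite /f /= in e.
    have [hx2 hx1] := correct_dec i hx; have [hy2 hy1] := correct_dec i hy.
    have hx1' := hx1 nl; have hy1' := hy1 nl.
    simpl in hx2, hy2, hx1', hy1'.
    have E : forall (S : {set 'I_K}) (t : 'I_n), i \in S -> enc x1 x2 S t = enc y1 y2 S t.
      by move=> S t; exact: (obs_agree e).
    by move: (ho1 _ _ E) (ho2 _ _ E); rewrite hx1' hy1' hx2 hy2 => -> ->.
  exact: max_card.
have := nerr_E; move/(congr1 INR); rewrite plus_INR => E.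
have := le_INR' h; rewrite (card_Obs n i ha); lra.
Qed.
End Conv2.

Lemma err_half m1 m2 (x : nat) : (0 < m1)%N -> (0 < m2)%N ->
  INR x / INR (m1 * m2) <= 1 / 2 -> INR x <= / 2 * (INR m1 * INR m2).
Proof.
move=> h1 h2; rewrite mult_INR => h.
have p1 : 0 < INR m1 by apply: lt_0_INR; apply/ltP.
have p2 : 0 < INR m2 by apply: lt_0_INR; apply/ltP.
have pp : 0 < INR m1 * INR m2 by nra.
have := Rmult_le_compat_r _ _ _ (Rlt_le _ _ pp) h.
rewrite /Rdiv Rmult_assoc Rinv_l ?Rmult_1_r; lra.
Qed.

Lemma P2_big n d : 1 * P2 (- (INR n * d)) <= / 4 -> 4 <= P2 (INR n * d).
Proof.
rewrite Rmult_1_l P2_opp => h.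
have hp := P2_pos (INR n * d).
have := Rinv_le_contravar _ _ (Rinv_0_lt_compat _ hp) h; rewrite !Rinv_inv; lra.
Qed.

Lemma conv_any K (a : {set 'I_K} -> nat) (ha : forall S : {set 'I_K}, S != set0 -> (0 < a S)%N)
  r1 r2 (i : 'I_K) : achievable a r1 r2 -> r2 <= capW a i.
Proof.
move=> [h1 [h2 H]]; apply: Rnot_lt_le => hlt.
have hd : 0 < r2 - capW a i by lra.
have h12 : 0 < 1/2 by lra.
have h4 : 0 < / 4 by lra.
have [N1 HN1] := H (1/2) h12.
have [N2 HN2] := ev_decay 1 hd h4.
pose n := maxn N1 N2.
have [enc [d1 [d2 [ho1 [ho2 herr]]]]] := HN1 n (leq_maxl _ _).
have [hm1 _] := msg_bounds n h1.
have [hm2 [hm2' _]] := msg_bounds n h2.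
have A := nerr_ge_any ha enc d1 (ho2 i).
have B := err_half hm1 hm2 herr.
have p1 : 0 < INR (msg_size n r1) by apply: lt_0_INR; apply/ltP.
have C : 4 <= P2 (INR n * (r2 - capW a i)).
  by apply: P2_big; apply: HN2; apply: leq_maxr.
have E : P2 (INR n * r2) = P2 (INR n * capW a i) * P2 (INR n * (r2 - capW a i)).
  by rewrite -P2_plus; congr P2; ring.
have hx := P2_pos (INR n * capW a i).
rewrite mult_INR in A.
move: A B C hm2' p1 hx; rewrite E.
move: (INR (msg_size n r1)) (INR (msg_size n r2)) (P2 (INR n * capW a i))
  (P2 (INR n * (r2 - capW a i))) (INR (n_errors enc d1 d2)) => z y x c err.
move=> A B C D p1 hx.
have : z * (y - 2 * x) <= 0 by lra.
have : x * 4 <= x * c by apply: Rmult_le_compat_l; lra.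
nra.
Qed.

Lemma conv_nl K (a : {set 'I_K} -> nat) (ha : forall S : {set 'I_K}, S != set0 -> (0 < a S)%N)
  r1 r2 (i : 'I_K) : ~~ is_last i -> achievable a r1 r2 -> r2 + r1 <= capW a i.
Proof.
move=> nl [h1 [h2 H]]; apply: Rnot_lt_le => hlt.
have hd : 0 < r1 + r2 - capW a i by lra.
have h12 : 0 < 1/2 by lra.
have h4 : 0 < / 4 by lra.
have [N1 HN1] := H (1/2) h12.
have [N2 HN2] := ev_decay 1 hd h4.
pose n := maxn N1 N2.
have [enc [d1 [d2 [ho1 [ho2 herr]]]]] := HN1 n (leq_maxl _ _).
have [hm1 [hm1' _]] := msg_bounds n h1.
have [hm2 [hm2' _]] := msg_bounds n h2.
have A := nerr_ge_nl ha enc nl (ho1 i) (ho2 i).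
have B := err_half hm1 hm2 herr.
have C : 4 <= P2 (INR n * (r1 + r2 - capW a i)).
  by apply: P2_big; apply: HN2; apply: leq_maxr.
have E : P2 (INR n * r1) * P2 (INR n * r2) = P2 (INR n * capW a i) * P2 (INR n * (r1 + r2 - capW a i)).
  by rewrite -!P2_plus; congr P2; ring.
have hx := P2_pos (INR n * capW a i).
have hy1 := P2_pos (INR n * r1).
have hy2 := P2_pos (INR n * r2).
rewrite mult_INR in A.
have F : P2 (INR n * r1) * P2 (INR n * r2) <= INR (msg_size n r1) * INR (msg_size n r2).
  by apply: Rmult_le_compat; lra.
move: A B C F hx E.
move: (INR (msg_size n r1) * INR (msg_size n r2)) (P2 (INR n * r1) * P2 (INR n * r2))
  (P2 (INR n * capW a i)) (P2 (INR n * (r1 + r2 - capW a i))) (INR (n_errors enc d1 d2)) => z y x c err.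
move=> A B C F hx E.
have : x * 4 <= x * c by apply: Rmult_le_compat_l; lra.
nra.
Qed.

Local Open Scope R_scope.

Lemma le_of_lt_eps x y : (forall d, 0 < d -> x < y + d) -> x <= y.
Proof. move=> H; apply: Rnot_lt_le => h; have := H (x - y) ltac:(lra); lra. Qed.

Lemma capW_split K (a : {set 'I_K} -> nat) (ha : forall S : {set 'I_K}, S != set0 -> (0 < a S)%N)
  (k0 j : 'I_K) : capW a j <= Cb a k0 j + capW a k0.
Proof.
rewrite /capW /Cb (bigID (fun T : {set 'I_K} => k0 \notin T)) /=; apply: Rplus_le_compat_l.
rewrite big_mkcond [X in _ <= X]big_mkcond /=; apply: Rsum_le => T _.
case hT: (T != set0); case: (j \in T); case: (k0 \in T) => /=;
  try exact: Rle_refl; exact: (cap_ge0 ha hT).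
Qed.

Theorem proposition2 (K : nat) (a : {set 'I_K} -> nat)
  (hK : (2 <= K)%nat)
  (ha : forall S : {set 'I_K}, S != set0 -> (0 < a S)%nat)
  (R1 R2 : R) :
  in_capacity_region a R1 R2 <->
  (Rle 0 R1 /\ Rle 0 R2 /\
   (forall k : 'I_K, is_last k -> Rle R2 (capW a k)) /\
   (forall j : 'I_K, ~~ is_last j -> Rle (Rplus R2 R1) (capW a j))).
Proof.
split.
  move=> H; split; [|split; [|split]].
  - apply: Rnot_lt_le => h; have [r1 [r2 [[h1 _] [e1 _]]]] := H (- R1) ltac:(lra).
    have := Rabs_def2 _ _ e1; lra.
  - apply: Rnot_lt_le => h; have [r1 [r2 [[_ [h2 _]] [_ e2]]]] := H (- R2) ltac:(lra).
    have := Rabs_def2 _ _ e2; lra.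
  - move=> k _; apply: le_of_lt_eps => d hd.
    have [r1 [r2 [hach [e1 e2]]]] := H d hd.
    have := conv_any ha k hach; have := Rabs_def2 _ _ e2; lra.
  - move=> j nl; apply: le_of_lt_eps => d hd.
    have [r1 [r2 [hach [e1 e2]]]] := H (d / 2) ltac:(lra).
    have := conv_nl ha nl hach; have := Rabs_def2 _ _ e1; have := Rabs_def2 _ _ e2; lra.
move=> [h1 [h2 [hk hj]]] delta hdelta.
have hK0 : (K.-1 < K)%N by rewrite ltn_predL; apply: leq_trans hK.
pose k0 : 'I_K := Ordinal hK0.
have hlast : forall i : 'I_K, is_last i = (i == k0) by move=> i.
have HK := hk k0 (eqxx _ : is_last k0).
pose t := (R1 + R2 + 1) / (R1 + R2 + 1 + delta).
have ht0 : 0 < t by rewrite /t; apply: Rdiv_lt_0_compat; lra.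
have ht1 : t < 1.
  rewrite /t; apply: (Rmult_lt_reg_r (R1 + R2 + 1 + delta)); first lra.
  rewrite /Rdiv Rmult_assoc Rinv_l; lra.
have h1t : 1 - t = delta / (R1 + R2 + 1 + delta) by rewrite /t; field; lra.
clearbody t.
have hclose : forall x, 0 <= x <= R1 + R2 -> Rabs (t * x - x) < delta.
  move=> x hx; rewrite Rabs_left1; last by nra.
  have -> : - (t * x - x) = x * (1 - t) by ring.
  rewrite h1t /Rdiv -Rmult_assoc; apply: (Rmult_lt_reg_r (R1 + R2 + 1 + delta)); first lra.
  rewrite Rmult_assoc Rinv_l; nra.
exists (t * R1), (t * R2); split; last by split; apply: hclose; lra.
pose mu := Rmax 0 (t * (R1 + R2 - capW a k0)).
have hm0 : 0 <= mu := Rmax_l _ _.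
have hm1 : t * (R1 + R2 - capW a k0) <= mu := Rmax_r _ _.
apply: (achv ha hlast (mu := mu)) => //.
- by rewrite /mu; apply: Rmax_lub; nra.
- by nra.
- move=> hr2; have hC : 0 < capW a k0 by nra.
  nra.
- move=> j nj hp; have nl : ~~ is_last j by rewrite hlast.
  have := hj j nl; nra.
- move=> j nj hp.
  have hpos : t * (R1 + R2 - capW a k0) = mu.
    rewrite /mu /Rmax; case: Rle_dec => //; move: hp; rewrite /mu /Rmax; case: Rle_dec => //; lra.
  have nl : ~~ is_last j by rewrite hlast.
  have := hj j nl; have := capW_split ha k0 j; nra.
Qed.
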